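(* Let $X$ be a random variable with values in a set $\mathcal{X}$, let $\theta=\theta(X)\in\mathbb{R}$ be a statistic of $X$, and let $L=(X_1,\dots,X_n)$ be an i.i.d. sample of $X$. Fix a batch size $m\ge 1$ and let $\hat\theta$ be an estimator of $\theta$ defined on samples of size $m$. Let $\mathcal{U}$ be the finite set (of cardinality $n^m$) of all functions $u:\{1,\dots,m\}\to\{1,\dots,n\}$, and for $u\in\mathcal U$ write $L_u=(X_{u(1)},\dots,X_{u(m)})$. Assume $\mathbb{E}_L\big(\hat\theta(L_u)^2\big)<\infty$ for every $u\in\mathcal U$. For $N\ge 1$ let $B=(U^1,\dots,U^N)$ be i.i.d. uniform on $\mathcal U$, independent of $L$, and define the bagged estimator $$\tilde\theta(L,B)=\frac1N\sum_{i=1}^N\hat\theta(L_{U^i}).$$ Let $U$ denote a random variable uniform on $\mathcal U$ independent of $L$, and let $\mathbb{E}_U,\mathrm{Var}_U$ denote expectation and variance with respect to $U$ only (with $L$ fixed). Then $$\mathrm{MSE}(\tilde\theta):=\mathbb{E}_{(L,B)}\big((\tilde\theta(L,B)-\theta)^2\big)=\frac1N F+G,$$ where $$F=\mathbb{E}_L\big(\mathrm{Var}_U(\hat\theta(L_U))\big)\ge 0,\qquad G=\mathrm{Var}_L\big(\mathbb{E}_U(\hat\theta(L_U))\big)+\big(\mathbb{E}_L(\mathbb{E}_U(\hat\theta(L_U)))-\theta\big)^2\ge 0$$ do not depend on $N$. More precisely: (1) $\mathbb{E}_{(L,B)}(\tilde\theta(L,B))=\mathbb{E}_L\big(\mathbb{E}_U(\hat\theta(L_U))\big)$;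 (2) $\mathrm{Var}_{(L,B)}(\tilde\theta(L,B))=\frac1N\mathbb{E}_L\big(\mathrm{Var}_U(\hat\theta(L_U))\big)+\mathrm{Var}_L\big(\mathbb{E}_U(\hat\theta(L_U))\big)$.
   Context: $\mathbb{E}_L,\mathrm{Var}_L$ denote expectation/variance with respect to the sample $L$, and $\mathbb{E}_{(L,B)},\mathrm{Var}_{(L,B)}$ with respect to the pair $(L,B)$. The sampling $L_U$ is uniform sampling with replacement of $m$ points from $L$. *)

(* Defs.v *)
From HB Require Import structures.
From mathcomp Require Import all_boot all_order all_algebra.
From mathcomp Require Import all_classical all_reals all_analysis.
Set Implicit Arguments. Unset Strict Implicit. Unset Printing Implicit Defensive.
Import Order.TTheory GRing.Theory Num.Theory.
Local Open Scope classical_set_scope.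
Local Open Scope ring_scope.

Definition unif_avg (R : realType) (I : finType) (f : I -> R) : R :=
  (#|I|%:R)^-1 * \sum_(i : I) f i.

Definition unif_var (R : realType) (I : finType) (f : I -> R) : R :=
  unif_avg (fun i => (f i - unif_avg f) ^+ 2).

Notation Idx m n := {ffun 'I_m -> 'I_n}.

Definition resample (Om T : Type) (n m : nat) (X : 'I_n -> Om -> T)
  (u : Idx m n) (w : Om) : 'I_m -> T := fun j => X (u j) w.

Definition bagged (R : realType) (Om T : Type) (n m N : nat)
  (thetahat : ('I_m -> T) -> R) (X : 'I_n -> Om -> T)
  (b : {ffun 'I_N -> Idx m n}) (w : Om) : R :=
  (N%:R)^-1 * \sum_(i < N) thetahat (resample X (b i) w).

(* Expectation with respect to the pair (L, B), where B is uniform on U^N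
   (i.e. U^1..U^N i.i.d. uniform on U) and independent of L. *)
Definition E_LB (dO : measure_display) (Om : measurableType dO) (R : realType)
  (P : probability Om R) (n m N : nat)
  (g : Om -> {ffun 'I_N -> Idx m n} -> R) : \bar R :=
  'E_P[fun w => unif_avg (g w)]%E.

Definition Var_LB (dO : measure_display) (Om : measurableType dO) (R : realType)
  (P : probability Om R) (n m N : nat)
  (g : Om -> {ffun 'I_N -> Idx m n} -> R) : \bar R :=
  E_LB P (fun w b => (g w b - fine (E_LB P g)) ^+ 2).

Definition iid (dO dT : measure_display) (Om : measurableType dO)
  (T : measurableType dT) (R : realType) (P : probability Om R) (n : nat)
  (X : 'I_n -> Om -> T) : Prop :=
  [/\ (forall i, measurable_fun setT (X i)),
      (forall i j (A : set T), measurable A ->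
          P (X i @^-1` A) = P (X j @^-1` A)) &
      (forall A : 'I_n -> set T, (forall i, measurable (A i)) ->
          P (\bigcap_(i in [set: 'I_n]) (X i @^-1` A i)) =
          (\prod_(i < n) P (X i @^-1` A i))%E)].

(* Main.v *)
Require Import Defs.
From HB Require Import structures.
From mathcomp Require Import all_boot all_order all_algebra.
From mathcomp Require Import all_classical all_reals all_analysis.
From mathcomp Require Import ring lra.
Import Order.TTheory GRing.Theory Num.Theory.
Local Open Scope ring_scope.

Section comb.
Variable R : realType.

Lemma prod_ffun_distr (I T : finType) (F : I -> T -> R) :
  \sum_(b : {ffun I -> T}) \prod_k F k (b k) = \prod_k \sum_t F k t.
Proof. by rewrite bigA_distr_bigA. Qed.

Lemma sum_ffun_coord (I T : finType) (h : T -> R) (i : I) :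
  (\sum_(b : {ffun I -> T}) h (b i)) * #|T|%:R = (\sum_t h t) * #|T|%:R ^+ #|I|.
Proof.
pose F k t := if k == i then h t else 1.
have E b : h (b i) = \prod_k F k (b k).
  rewrite (bigD1 i) //= /F eqxx big1 ?mulr1 // => k /negPf ->.
  done.
under eq_bigr do rewrite E.
rewrite prod_ffun_distr (bigD1 i) //= {1}/F eqxx -mulrA; congr (_ * _).
rewrite -[#|I|]card_ord.
have -> : #|T|%:R ^+ #|'I_#|I| | = \prod_(k : I) (#|T|%:R : R).
  by rewrite prodr_const card_ord.
rewrite [RHS](bigD1 i) //= mulrC; congr (_ * _).
apply: eq_bigr => k /negPf Hk; rewrite /F Hk.
by rewrite sumr_const.
Qed.

Lemma sum_ffun_cross (I T : finType) (g : T -> R) (i j : I) :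
  i != j -> \sum_t g t = 0 ->
  \sum_(b : {ffun I -> T}) g (b i) * g (b j) = 0.
Proof.
move=> ij g0.
pose F k t := if k == i then g t else if k == j then g t else 1.
have E b : g (b i) * g (b j) = \prod_k F k (b k).
  rewrite (bigD1 i) //= /F eqxx (bigD1 j) /=; last by rewrite eq_sym.
  have ji : (j == i) = false by rewrite eq_sym; exact: negPf ij.
  rewrite ji eqxx mulrA.
  rewrite big1 ?mulr1 // => k /andP[/negPf -> /negPf ->] //.
under eq_bigr do rewrite E.
rewrite prod_ffun_distr (bigD1 i) //= {1}/F.
under eq_bigr do rewrite eqxx.
by rewrite g0 mul0r.
Qed.

Lemma sum_ffun_coord' (N : nat) (T : finType) (h : T -> R) (i : 'I_N) :
  (0 < #|T|)%N ->
  \sum_(b : {ffun 'I_N -> T}) h (b i) = (\sum_t h t) * #|T|%:R ^+ N / #|T|%:R.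
Proof.
move=> T0; apply: (mulIf (x := #|T|%:R)); first by rewrite pnatr_eq0 -lt0n.
rewrite sum_ffun_coord card_ord mulfVK //; by rewrite pnatr_eq0 -lt0n.
Qed.

Lemma avg_bag (N : nat) (T : finType) (f : T -> R) :
  (0 < N)%N -> (0 < #|T|)%N ->
  unif_avg (fun b : {ffun 'I_N -> T} => N%:R^-1 * \sum_(i < N) f (b i))
  = unif_avg f.
Proof.
move=> N0 T0.
have M0 : (#|T|%:R : R) != 0 by rewrite pnatr_eq0 -lt0n.
have NN0 : (N%:R : R) != 0 by rewrite pnatr_eq0 -lt0n.
rewrite /unif_avg card_ffun natrX card_ord -mulr_sumr exchange_big /=.
under eq_bigr do rewrite sum_ffun_coord' //.
rewrite sumr_const card_ord -mulr_natr.
field.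
by rewrite M0 NN0 mul1r expf_neq0.
Qed.

Lemma avg_bag_sq (N : nat) (T : finType) (f : T -> R) (c : R) :
  (0 < N)%N -> (0 < #|T|)%N ->
  unif_avg (fun b : {ffun 'I_N -> T} => (N%:R^-1 * \sum_(i < N) f (b i) - c) ^+ 2)
  = N%:R^-1 * unif_var f + (unif_avg f - c) ^+ 2.
Proof.
move=> N0 T0.
have M0 : (#|T|%:R : R) != 0 by rewrite pnatr_eq0 -lt0n.
have NN0 : (N%:R : R) != 0 by rewrite pnatr_eq0 -lt0n.
set E := unif_avg f.
pose g t := f t - E.
have g0 : \sum_t g t = 0.
  rewrite /g sumrB sumr_const /E /unif_avg -mulr_natr.
  by field.
pose s (b : {ffun 'I_N -> T}) := \sum_(i < N) g (b i).
have decomp (b : {ffun 'I_N -> T}) : N%:R^-1 * \sum_(i < N) f (b i) - c = N%:R^-1 * s b + (E - c).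
  rewrite /s /g sumrB sumr_const card_ord -mulr_natr.
  by field.
have S1 : \sum_(b : {ffun 'I_N -> T}) s b = 0.
  rewrite /s exchange_big /=.
  under eq_bigr do rewrite sum_ffun_coord' // g0 !mul0r.
  by rewrite big1.
have S2 : \sum_(b : {ffun 'I_N -> T}) s b ^+ 2
          = N%:R * (\sum_t g t ^+ 2) * #|T|%:R ^+ N / #|T|%:R.
  have -> : \sum_(b : {ffun 'I_N -> T}) s b ^+ 2 =
      \sum_(i < N) \sum_(j < N) \sum_(b : {ffun 'I_N -> T}) g (b i) * g (b j).
    transitivity (\sum_(b : {ffun 'I_N -> T}) \sum_(i < N) \sum_(j < N) g (b i) * g (b j)).
      apply: eq_bigr => b _; rewrite /s expr2 mulr_suml.
      by apply: eq_bigr => i _; rewrite mulr_sumr.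
    rewrite exchange_big /=; apply: eq_bigr => i _.
    by rewrite exchange_big.
  transitivity (\sum_(i < N) \sum_(b : {ffun 'I_N -> T}) g (b i) ^+ 2).
    apply: eq_bigr => i _.
    rewrite (bigD1 i) //= [X in _ + X]big1 => [|j ji]; last first.
      by apply: sum_ffun_cross; rewrite // eq_sym.
    by rewrite addr0; apply: eq_bigr => b _; rewrite expr2.
  under eq_bigr => i _ do rewrite (@sum_ffun_coord' N T (fun t => g t ^+ 2) i T0).
  rewrite sumr_const card_ord; ring.
have V : unif_var f = #|T|%:R^-1 * \sum_t g t ^+ 2 by [].
rewrite V {1}/unif_avg.
under eq_bigr do rewrite decomp.
have -> : \sum_(b : {ffun 'I_N -> T}) (N%:R^-1 * s b + (E - c)) ^+ 2 =
   N%:R^-1 ^+ 2 * (\sum_b s b ^+ 2) + (2 * N%:R^-1 * (E - c)) * (\sum_b s b)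
   + (E - c) ^+ 2 *+ #|{ffun 'I_N -> T}|.
  rewrite !mulr_sumr -sumr_const -!big_split /=.
  by apply: eq_bigr => b _; ring.
rewrite S1 S2 card_ffun card_ord natrX -[(E - c) ^+ 2 *+ _]mulr_natr natrX.
field.
by rewrite M0 NN0 expf_neq0.
Qed.
End comb.

Section meas.
Context d (Om : measurableType d) (R : realType) (P : probability Om R).
Variables (U : finType) (fu : U -> Om -> R).
Hypothesis fu2 : forall u, fu u \in Lfun P 2%:E.

Lemma Lfun_sum (I : finType) (p : \bar R) (p1 : (1 <= p)%E) (F : I -> Om -> R) :
  (forall i, F i \in Lfun P p) -> \sum_i F i \in Lfun P p.
Proof.
move=> H; have [H0 HD] := Lfun_addr_closed P p1.
by apply: (big_ind (fun f => f \in Lfun P p)) => // x y hx hy; apply: HD.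
Qed.

Lemma Lfun_B (p : \bar R) (p1 : (1 <= p)%E) (f g : Om -> R) :
  f \in Lfun P p -> g \in Lfun P p -> (f \- g) \in Lfun P p.
Proof.
move=> hf hg; have [_ HD] := Lfun_submod_closed P p1.
have -> : (f \- g) = (-1) *: g + f.
  by apply/funext => w /=; rewrite scaleN1r addrC.
exact: HD.
Qed.

Lemma Lfun_D (p : \bar R) (p1 : (1 <= p)%E) (f g : Om -> R) :
  f \in Lfun P p -> g \in Lfun P p -> (f \+ g) \in Lfun P p.
Proof. by move=> hf hg; have [_ HD] := Lfun_addr_closed P p1; exact: HD. Qed.

Let EU := fun w => unif_avg (fun u => fu u w).
Let VU := fun w => unif_var (fun u => fu u w).

Lemma EU_L2 : EU \in Lfun P 2%:E.
Proof.
have -> : EU = (#|U|%:R^-1) \o* (\sum_u fu u).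
  by apply/funext => w; rewrite /EU /unif_avg /= fct_sumE mulrC.
apply: (@Lfun_scale _ _ _ _ _ _ 2); first by rewrite ler1n.
have p2 : (1 <= (2:R)%:E)%E by rewrite lee1n.
exact: (@Lfun_sum U _ p2 _ fu2).
Qed.

Lemma VU_L1 : VU \in Lfun P 1.
Proof.
have -> : VU = (#|U|%:R^-1) \o* (\sum_u ((fu u \- EU) \* (fu u \- EU))).
  by apply/funext => w; rewrite /VU /unif_var /unif_avg /= fct_sumE mulrC; under eq_bigr do rewrite expr2.
apply: (@Lfun_scale _ _ _ _ _ _ 1) => //.
apply: (@Lfun_sum U _ (lexx _)) => u.
have p2 : (1 <= (2:R)%:E)%E by rewrite lee1n.
have h : fu u \- EU \in Lfun P 2%:E by apply: (@Lfun_B _ p2) => //; exact: EU_L2.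
exact: Lfun2_mul_Lfun1.
Qed.

Lemma E_formula (N : nat) (c : R) :
  'E_P[fun w => (N%:R^-1 * VU w + (EU w - c) ^+ 2)%R]%E =
  ((N%:R^-1)%:E * 'E_P[VU] + ('V_P[EU] + ('E_P[EU] - c%:E) * ('E_P[EU] - c%:E)))%E.
Proof.
have EU2 := EU_L2.
have EU1 : EU \in Lfun P 1 := Lfun_subset12 (fin_num_measure P _ measurableT) EU2.
have EUU : EU \* EU \in Lfun P 1 := Lfun2_mul_Lfun1 EU2 EU2.
have VU1 := VU_L1.
have p1 : (1 <= (1:R)%:E)%E by [].
rewrite varianceE //.
have -> : EU ^+ 2 = EU \* EU by apply/funext => w /=; rewrite expr2.
have -> : (fun w => N%:R^-1 * VU w + (EU w - c) ^+ 2) =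
   ((N%:R^-1) \o* VU) \+ ((EU \* EU) \+ (((-2*c) \o* EU) \+ cst (c^+2))).
  by apply/funext => w /=; ring.
have L1 : (-2*c) \o* EU \in Lfun P 1 by exact: Lfun_scale.
have L2 : cst (c^+2) \in Lfun P 1 by exact: Lfun_cst.
have L3 : (N%:R^-1) \o* VU \in Lfun P 1 by exact: Lfun_scale.
rewrite expectationD //; last by apply: (@Lfun_D _ p1) => //; apply: (@Lfun_D _ p1).
rewrite expectationD //; last by apply: (@Lfun_D _ p1).
rewrite expectationD // expectation_cst !expectationZl //.
rewrite -(fineK (expectation_fin_num VU1)) -(fineK (expectation_fin_num EU1)).
rewrite -(fineK (expectation_fin_num EUU)).
congr EFin; ring.
Qed.
End meas.


Lemma L2_of d (Om : measurableType d) (R : realType) (P : probability Om R) (f : Om -> R) :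
  measurable_fun setT f -> ('E_P[fun w => (f w ^+ 2)%R] < +oo)%E -> f \in Lfun P 2%:E.
Proof.
move=> mf hE.
rewrite inE; apply/andP; split; first by rewrite inE.
rewrite inE /= /finite_norm unlock /Lnorm.
apply: poweR_lty.
move: hE; rewrite unlock => hE.
apply: le_lt_trans hE; rewrite le_eqVlt; apply/orP; left; apply/eqP.
apply: eq_integral => x _ /=.
by rewrite powR_mulrn ?normr_ge0 // real_normK ?num_real.
Qed.

Theorem theorem1 (dO dT : measure_display) (Om : measurableType dO)
  (T : measurableType dT) (R : realType) (P : probability Om R)
  (n m N : nat) (X : 'I_n -> Om -> T) (thetahat : ('I_m -> T) -> R)
  (theta : R) :
  (0 < n)%N -> (0 < m)%N -> (0 < N)%N ->
  iid P X ->
  (forall u : Idx m n,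
      measurable_fun setT (fun w => thetahat (resample X u w))) ->
  (forall u : Idx m n,
      ('E_P[fun w => (thetahat (resample X u w) ^+ 2)%R] < +oo)%E) ->
  let EU := fun w => unif_avg (fun u : Idx m n => thetahat (resample X u w)) in
  let VU := fun w => unif_var (fun u : Idx m n => thetahat (resample X u w)) in
  let F := 'E_P[VU]%E in
  let G := ('V_P[EU] + ('E_P[EU] - theta%:E) * ('E_P[EU] - theta%:E))%E in
  [/\ E_LB P (fun w (b : {ffun 'I_N -> Idx m n}) =>
          (bagged thetahat X b w - theta) ^+ 2)
        = ((N%:R)^-1%:E * F + G)%E,
      (0 <= F)%E, (0 <= G)%E,
      E_LB P (fun w (b : {ffun 'I_N -> Idx m n}) => bagged thetahat X b w)
        = 'E_P[EU]%E &
      Var_LB P (fun w (b : {ffun 'I_N -> Idx m n}) => bagged thetahat X b w)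
        = ((N%:R)^-1%:E * F + 'V_P[EU])%E].
Proof.
move=> n0 m0 N0 _ hmeas hE2 EU VU F G.
pose fu := fun (u : Idx m n) w => thetahat (resample X u w).
have fu2 u : fu u \in Lfun P 2%:E by apply: L2_of; [exact: hmeas | exact: hE2].
have T0 : (0 < #|Idx m n|)%N by rewrite card_ffun card_ord expn_gt0 card_ord n0.
have EUL1 : EU \in Lfun P 1.
  exact: (Lfun_subset12 (fin_num_measure P _ measurableT) (@EU_L2 _ _ _ P _ fu fu2)).
have Efin : 'E_P[EU]%E \is a fin_num by exact: expectation_fin_num.
have Hsq c : E_LB P (fun w (b : {ffun 'I_N -> Idx m n}) =>
          (bagged thetahat X b w - c) ^+ 2) =
     ((N%:R)^-1%:E * F + ('V_P[EU] + ('E_P[EU] - c%:E) * ('E_P[EU] - c%:E)))%E.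
  rewrite /E_LB -(@E_formula _ _ _ P _ fu fu2 N c).
  congr expectation; apply/funext => w.
  exact: (@avg_bag_sq R N _ (fun u => fu u w) c N0 T0).
have Hmean : E_LB P (fun w (b : {ffun 'I_N -> Idx m n}) => bagged thetahat X b w)
        = 'E_P[EU]%E.
  rewrite /E_LB; congr expectation; apply/funext => w.
  exact: (@avg_bag R N _ (fun u => fu u w) N0 T0).
split.
- exact: Hsq.
- apply: expectation_ge0 => w; rewrite /VU /unif_var /unif_avg.
  apply: mulr_ge0; first by rewrite invr_ge0.
  by apply: sumr_ge0 => u _; exact: sqr_ge0.
- apply: adde_ge0; first exact: variance_ge0.
  rewrite -(fineK Efin) -EFinB -EFinM lee_fin -expr2; exact: sqr_ge0.
- exact: Hmean.
- rewrite /Var_LB Hmean Hsq fineK // subee // mul0e adde0 //.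
Qed.
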